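(* Let $(X,d)$ be a compact doubling metric space with $\operatorname{diam}(X,d)=1/2$ and $\mathcal S$ a hyperbolic filling with parameters $a\ge\lambda\ge6$. Let $\rho:\mathcal S\to(0,\infty)$ satisfy (H1) and (H4) (exponent $p$). Let $C>1$, let $\mu_k$ be a $(C,\pi)$-balanced probability mass function on $\mathcal S_k$, and let $f_0:\mathcal S_{k+1}\to(0,1]$ be a probability mass function such that $(\mu_k,f_0)$ is $(C,\pi)$-compatible. Let $e=\{w_1,w_1'\}$ be a horizontal edge in $\mathcal S_{k+1}$ on which $f_0$ is $(C,\pi)$-unbalanced. If $e'=\{w,w'\}$ is a horizontal edge in $\mathcal S_{k+1}$ on which $f_0$ is $(C,\pi)$-balanced, then $B^e_{k+1}(f_0)$ is also $(C,\pi)$-balanced on $e'$.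
   Context: Hyperbolic filling: $X_0\subset X_1\subset\cdots$ increasing, $X_n$ maximal $a^{-n}$-separated in $X$ ($X_0=\{x_0\}$); $\mathcal S_n=\{(x,n):x\in X_n\}$, $\mathcal S=\bigcup_n\mathcal S_n$, $v_0=(x_0,0)$. Each $(x,n)$, $n\ge1$, has a fixed parent $(y,n-1)$ with $d(x,y)=\min_{z\in X_{n-1}}d(x,z)$; $\mathcal D_n(v)$ = descendants of $v$ in $\mathcal S_n$; genealogy $g(v)=(v_0,\dots,v_k=v)$. $D_2$: graph distance for the graph with edges vertex–parent and horizontal edges between distinct $(x,n),(y,n)$ with $B(x,\lambda a^{-n})\cap B(y,\lambda a^{-n})\ne\emptyset$. $\pi(v)=\prod_{w\in g(v)}\rho(w)$. (H1) $0<\eta_-\le\rho\le\eta_+<1$. (H4) $\sum_{w\in\mathcal D_n(v)}\pi(w)^p\le\pi(v)^p$ for all $v\in\mathcal S_m$, $n>m$. $f:\mathcal S_k\to(0,\infty)$ is $(C,\pi)$-balanced if $f(u)/\pi(u)^p\le C^2f(v)/\pi(v)^p$ for all $u,v\in\mathcal S_k$ with $D_2(u,v)=1$; it is $(C,\pi)$-balanced on an edge $\{u,v\}$ if $C^{-2}f(v)/\pi(v)^p\le f(u)/\pi(u)^p\le C^2f(v)/\pi(v)^p$, and $(C,\pi)$-unbalanced on it otherwise. $(f_0,f_1)$ is $(C,\pi)$-compatible if $f_0(u)/\pi(u)^p\le f_1(v)/\pi(v)^p\le Cf_0(u)/\pi(u)^p$ whenever $u$ is the parent of $v$. Balancing operator: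 for a horizontal edge $e=\{u,v\}$ in $\mathcal S_j$ and $f:\mathcal S_j\to(0,\infty)$, $B^e_j(f)=f$ if $f$ is balanced on $e$; if $f(u)/\pi(u)^p>C^2f(v)/\pi(v)^p$, then $B^e_j(f)$ agrees with $f$ off $\{u,v\}$ and equals $f(u)-\alpha$ at $u$, $f(v)+\alpha$ at $v$, with $\alpha(C^2/\pi(v)^p+1/\pi(u)^p)=f(u)/\pi(u)^p-C^2f(v)/\pi(v)^p$; symmetrically if $f(v)/\pi(v)^p>C^2f(u)/\pi(u)^p$. *)

(* Defs.v *)
From Stdlib Require Import Reals Lra List ClassicalEpsilon.
Import ListNotations.
Open Scope R_scope.

Section Filling.
Variable X : Type.
Variable d : X -> X -> R.

Definition is_metric : Prop :=
  (forall x y, 0 <= d x y) /\ (forall x y, d x y = 0 <-> x = y) /\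
  (forall x y, d x y = d y x) /\ (forall x y z, d x z <= d x y + d y z).

Definition ball (x : X) (r : R) (z : X) : Prop := d x z < r.

Definition metric_open (U : X -> Prop) : Prop :=
  forall x, U x -> exists r, 0 < r /\ forall z, ball x r z -> U z.

Definition metric_compact : Prop :=
  forall (I : Type) (U : I -> X -> Prop),
    (forall i, metric_open (U i)) -> (forall x, exists i, U i x) ->
    exists l : list I, forall x, exists i, In i l /\ U i x.

Definition doubling : Prop :=
  exists N : nat, forall x r, 0 < r ->
    exists l : list X, (length l <= N)%nat /\
      forall z, ball x r z -> exists y, In y l /\ ball y (r / 2) z.

Definition diam_eq (D : R) : Prop :=
  is_lub (fun r => exists x y, r = d x y) D.

Definition separated (r : R) (A : X -> Prop) : Prop :=
  forall x y, A x -> A y -> x <> y -> r <= d x y.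

Definition maximal_separated (r : R) (A : X -> Prop) : Prop :=
  separated r A /\
  forall B : X -> Prop, (forall x, A x -> B x) -> separated r B ->
    forall x, B x -> A x.

(* Hyperbolic filling data: level sets Xs n (vertex (x,n) <-> Xs n x),
   root x0, and parent map: the parent of (x,n+1) is (par x (n+1), n). *)
Definition hyperbolic_filling (a : R) (Xs : nat -> X -> Prop) (x0 : X)
    (par : X -> nat -> X) : Prop :=
  (forall x, Xs 0%nat x <-> x = x0) /\
  (forall n x, Xs n x -> Xs (S n) x) /\
  (forall n, maximal_separated (/ a ^ n) (Xs n)) /\
  (forall n x, Xs (S n) x ->
     Xs n (par x (S n)) /\ forall z, Xs n z -> d x (par x (S n)) <= d x z).

Definition hedge (a lam : R) (Xs : nat -> X -> Prop) (n : nat) (x y : X) : Prop :=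
  Xs n x /\ Xs n y /\ x <> y /\
  exists z, ball x (lam / a ^ n) z /\ ball y (lam / a ^ n) z.

Definition adj2 (a lam : R) (Xs : nat -> X -> Prop) (par : X -> nat -> X)
    (u v : X * nat) : Prop :=
  let (x, n) := u in let (y, m) := v in
  (m = S n /\ Xs m y /\ Xs n x /\ par y m = x) \/
  (n = S m /\ Xs n x /\ Xs m y /\ par x n = y) \/
  (n = m /\ hedge a lam Xs n x y).

(* D_2(u,v) = 1 : u, v distinct and adjacent *)
Definition D2_eq1 a lam Xs par (u v : X * nat) : Prop :=
  u <> v /\ adj2 a lam Xs par u v.

Fixpoint anc (par : X -> nat -> X) (x : X) (n m : nat) : X :=
  match n with
  | O => x
  | S n' => if Nat.leb (S n') m then x else anc par (par x (S n')) n' m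
  end.

Fixpoint pi (rho : X -> nat -> R) (par : X -> nat -> X) (x : X) (n : nat) : R :=
  match n with
  | O => rho x O
  | S n' => rho x (S n') * pi rho par (par x (S n')) n'
  end.

Definition rsum (f : X -> R) (l : list X) : R := fold_right Rplus 0 (map f l).

Definition H1 (Xs : nat -> X -> Prop) (rho : X -> nat -> R) (em ep : R) : Prop :=
  0 < em /\ ep < 1 /\ forall n x, Xs n x -> em <= rho x n <= ep.

(* (H4): D_n(v) is finite; its sum of pi^p is at most pi(v)^p *)
Definition H4 (Xs : nat -> X -> Prop) (rho : X -> nat -> R) (par : X -> nat -> X)
    (p : R) : Prop :=
  forall m n y, Xs m y -> (m < n)%nat ->
    exists l : list X, NoDup l /\
      (forall x, In x l <-> (Xs n x /\ anc par x n m = y)) /\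
      rsum (fun x => Rpower (pi rho par x n) p) l <= Rpower (pi rho par y m) p.

Definition pmf (Xs : nat -> X -> Prop) (n : nat) (f : X -> R) : Prop :=
  (forall x, Xs n x -> 0 < f x) /\
  exists l : list X, NoDup l /\ (forall x, In x l <-> Xs n x) /\ rsum f l = 1.

Definition Fn (rho : X -> nat -> R) (par : X -> nat -> X) (p : R) (n : nat)
    (f : X -> R) (x : X) : R := f x / Rpower (pi rho par x n) p.

Definition balanced a lam Xs par rho p (C : R) (n : nat) (f : X -> R) : Prop :=
  forall u v, Xs n u -> Xs n v -> D2_eq1 a lam Xs par (u, n) (v, n) ->
    Fn rho par p n f u <= C ^ 2 * Fn rho par p n f v.

Definition balanced_on rho par p (C : R) (n : nat) (f : X -> R) (u v : X) : Prop :=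
  / C ^ 2 * Fn rho par p n f v <= Fn rho par p n f u <= C ^ 2 * Fn rho par p n f v.

Definition compatible Xs rho par p (C : R) (k : nat) (f0 f1 : X -> R) : Prop :=
  forall v, Xs (S k) v ->
    Fn rho par p k f0 (par v (S k)) <= Fn rho par p (S k) f1 v <=
    C * Fn rho par p k f0 (par v (S k)).

Definition Xeq (x y : X) : bool :=
  if excluded_middle_informative (x = y) then true else false.

Definition shift (f : X -> R) (u v : X) (al : R) : X -> R :=
  fun z => if Xeq z u then f u - al else if Xeq z v then f v + al else f z.

Definition balance rho par p (C : R) (n : nat) (u v : X) (f : X -> R) : X -> R :=
  let Fu := Fn rho par p n f u in
  let Fv := Fn rho par p n f v in
  let Pu := Rpower (pi rho par u n) p in
  let Pv := Rpower (pi rho par v n) p in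
  if Rlt_dec (C ^ 2 * Fv) Fu then
    shift f u v ((Fu - C ^ 2 * Fv) / (C ^ 2 / Pv + / Pu))
  else if Rlt_dec (C ^ 2 * Fu) Fv then
    shift f v u ((Fv - C ^ 2 * Fu) / (C ^ 2 / Pu + / Pv))
  else f.

End Filling.

(* Main.v *)
Require Import Defs.
From Stdlib Require Import Reals.
Open Scope R_scope.
From Stdlib Require Import Reals Lra Classical ClassicalEpsilon.

Lemma hedge_sym X d a lam Xs n x y (Hm : is_metric X d) :
  hedge X d a lam Xs n x y -> hedge X d a lam Xs n y x.
Proof. intros [H1 [H2 [H3 [z [Hz1 Hz2]]]]]. repeat split; auto. exists z; auto. Qed.

Lemma bal_sym X rho par p C n f u v : 0 < C ->
  balanced_on X rho par p C n f u v -> balanced_on X rho par p C n f v u.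
Proof.
  unfold balanced_on. intros HC [H1 H2].
  assert (Hc : 0 < C^2) by (apply pow_lt; lra).
  split.
  - apply (Rmult_le_reg_l (C^2)); auto. rewrite <- Rmult_assoc, Rinv_r by lra. lra.
  - apply (Rmult_le_reg_l (/ C^2)). apply Rinv_0_lt_compat; auto.
    rewrite <- Rmult_assoc, Rinv_l by lra. lra.
Qed.

Lemma close_parent X d a Xs x0 par k x (Hm : is_metric X d) (Ha : 0 < a)
  (Hf : hyperbolic_filling X d a Xs x0 par) (Hx : Xs (S k) x) :
  d x (par x (S k)) < / a ^ k.
Proof.
  destruct Hf as [_ [_ [Hms Hpar]]]. destruct (Hpar k x Hx) as [Hp Hmin].
  destruct Hm as [Hd0 [Hdeq [Hsym Htri]]].
  assert (HA : 0 < / a ^ k) by (apply Rinv_0_lt_compat, pow_lt; auto).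
  destruct (classic (exists z, Xs k z /\ d x z < / a ^ k)) as [[z [Hz1 Hz2]]|Hn].
  - specialize (Hmin z Hz1). lra.
  - exfalso. destruct (Hms k) as [Hsep Hmax].
    assert (Hx' : Xs k x).
    { apply (Hmax (fun y => Xs k y \/ y = x)); auto.
      intros y1 y2 [Hy1|Hy1] [Hy2|Hy2] Hne.
      - apply Hsep; auto.
      - subst. rewrite Hsym. apply Rnot_lt_le. intro. apply Hn. eauto.
      - subst. apply Rnot_lt_le. intro. apply Hn. eauto.
      - subst. congruence. }
    apply Hn. exists x. split; auto. replace (d x x) with 0 by (symmetry; apply Hdeq; auto). auto.
Qed.

Lemma parents_close X d a lam Xs x0 par k y1 m y2 (Hm : is_metric X d)
  (Hla : lam <= a) (Hl6 : 6 <= lam)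
  (Hf : hyperbolic_filling X d a Xs x0 par)
  (H1 : hedge X d a lam Xs (S k) y1 m) (H2 : hedge X d a lam Xs (S k) m y2) :
  par y1 (S k) = par y2 (S k) \/
  hedge X d a lam Xs k (par y1 (S k)) (par y2 (S k)).
Proof.
  assert (Ha : 0 < a) by lra.
  destruct (classic (par y1 (S k) = par y2 (S k))) as [E|Ne]; [left; auto| right].
  destruct H1 as [Hy1 [Hm1 [_ [z1 [Hz1 Hz1']]]]].
  destruct H2 as [Hm2 [Hy2 [_ [z2 [Hz2 Hz2']]]]].
  unfold ball in *.
  pose proof (close_parent X d a Xs x0 par k y1 Hm Ha Hf Hy1) as C1.
  pose proof (close_parent X d a Xs x0 par k y2 Hm Ha Hf Hy2) as C2.
  pose proof Hm as [Hd0 [Hdeq [Hsym Htri]]].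
  destruct Hf as [_ [_ [_ Hpar]]].
  assert (HA : 0 < a ^ k) by (apply pow_lt; auto).
  assert (Hr : lam / a ^ S k <= / a ^ k).
  { change (a ^ S k) with (a * a ^ k). unfold Rdiv. rewrite Rinv_mult.
    rewrite <- Rmult_assoc. rewrite <- (Rmult_1_l (/ a ^ k)) at 2.
    apply Rmult_le_compat_r. left; apply Rinv_0_lt_compat; auto.
    apply (Rmult_le_reg_r a); auto. rewrite Rmult_assoc, Rinv_l; lra. }
  assert (Hl : 6 * / a ^ k <= lam / a ^ k).
  { unfold Rdiv. apply Rmult_le_compat_r; [left; apply Rinv_0_lt_compat; auto| lra]. }
  set (r := lam / a ^ S k) in *.
  pose proof (Htri y1 z1 m). pose proof (Htri z1 m z2). pose proof (Htri m z2 y2).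
  pose proof (Htri y1 m y2). rewrite (Hsym z1 m) in *. rewrite (Hsym z2 y2) in *.
  pose proof (Htri (par y1 (S k)) y1 (par y2 (S k))).
  pose proof (Htri y1 y2 (par y2 (S k))).
  rewrite (Hsym (par y1 (S k)) y1) in *.
  split; [apply Hpar; auto|]. split; [apply Hpar; auto|]. split; auto.
  exists (par y1 (S k)). unfold ball. split.
  - replace (d _ _) with 0 by (symmetry; apply Hdeq; auto). unfold Rdiv.
    apply Rmult_lt_0_compat; [lra| apply Rinv_0_lt_compat; auto].
  - rewrite Hsym. lra.
Qed.

Lemma Rpower_gt0 x p : 0 < Rpower x p.
Proof. unfold Rpower. apply exp_pos. Qed.

Lemma dist2F X d a lam Xs x0 par rho p C k mu f0 y1 m y2 (Hm : is_metric X d)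
  (Hla : lam <= a) (Hl6 : 6 <= lam)
  (Hf : hyperbolic_filling X d a Xs x0 par) (HC : 1 < C)
  (Hmu : pmf X Xs k mu) (Hmub : balanced X d a lam Xs par rho p C k mu)
  (Hcomp : compatible X Xs rho par p C k mu f0)
  (H1 : hedge X d a lam Xs (S k) y1 m) (H2 : hedge X d a lam Xs (S k) m y2) :
  Fn X rho par p (S k) f0 y1 <= C ^ 3 * Fn X rho par p (S k) f0 y2.
Proof.
  assert (Hy1 : Xs (S k) y1) by apply H1.
  assert (Hy2 : Xs (S k) y2) by apply H2.
  destruct (Hcomp y1 Hy1) as [_ A1]. destruct (Hcomp y2 Hy2) as [A2 _].
  assert (Hp2 : Xs k (par y2 (S k))) by (apply Hf; auto).
  assert (Gp : 0 < Fn X rho par p k mu (par y2 (S k))).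
  { unfold Fn. unfold Rdiv. apply Rmult_lt_0_compat. apply Hmu; auto.
    apply Rinv_0_lt_compat, Rpower_gt0. }
  assert (B : Fn X rho par p k mu (par y1 (S k)) <= C^2 * Fn X rho par p k mu (par y2 (S k))).
  { destruct (parents_close X d a lam Xs x0 par k y1 m y2 Hm Hla Hl6 Hf H1 H2) as [E|Hh].
    - rewrite E. assert (1 <= C^2) by (simpl; nra). nra.
    - apply Hmub. apply Hh. apply Hh. split.
      + intro E; injection E; intros; apply Hh; auto.
      + simpl. right; right. split; auto. }
  assert (0 < C^2) by (apply pow_lt; lra).
  change (C^3) with (C * C^2). eapply Rle_trans; [exact A1|].
  rewrite Rmult_assoc. apply Rmult_le_compat_l; [lra|].
  eapply Rle_trans; [exact B|]. apply Rmult_le_compat_l; lra.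
Qed.

Lemma Xeq_refl X (x : X) : Xeq X x x = true.
Proof. unfold Xeq. destruct excluded_middle_informative; congruence. Qed.
Lemma Xeq_neq X (x y : X) : x <> y -> Xeq X x y = false.
Proof. unfold Xeq. destruct excluded_middle_informative; congruence. Qed.

Lemma arith (Pu Pv c fu fv : R) : 0 < Pu -> 0 < Pv -> 0 < c ->
  c * (fv / Pv) < fu / Pu ->
  let al := (fu / Pu - c * (fv / Pv)) / (c / Pv + / Pu) in
  (fu - al) / Pu = c * ((fv + al) / Pv) /\ (fu - al) / Pu <= fu / Pu /\
  fv / Pv <= (fv + al) / Pv.
Proof.
  intros HPu HPv Hc Hlt al.
  assert (Hden : 0 < c / Pv + / Pu).
  { assert (0 < c / Pv) by (unfold Rdiv; apply Rmult_lt_0_compat; auto; apply Rinv_0_lt_compat; auto).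
    assert (0 < / Pu) by (apply Rinv_0_lt_compat; auto). lra. }
  assert (Hal : 0 < al).
  { unfold al, Rdiv at 1. apply Rmult_lt_0_compat; [lra| apply Rinv_0_lt_compat; auto]. }
  split; [|split].
  - unfold al. field. repeat split; try lra. nra.
  - unfold Rdiv. apply Rmult_le_compat_r; [left; apply Rinv_0_lt_compat; auto| lra].
  - unfold Rdiv. apply Rmult_le_compat_r; [left; apply Rinv_0_lt_compat; auto| lra].
Qed.

Lemma caseA X d a lam Xs x0 par rho p C k mu f0 (Hm : is_metric X d)
  (Hla : lam <= a) (Hl6 : 6 <= lam)
  (Hf : hyperbolic_filling X d a Xs x0 par) (HC : 1 < C)
  (Hmu : pmf X Xs k mu) (Hmub : balanced X d a lam Xs par rho p C k mu)
  (Hcomp : compatible X Xs rho par p C k mu f0)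
  (Hf0 : pmf X Xs (S k) f0)
  u v (Huv : hedge X d a lam Xs (S k) u v)
  (Hlt : C ^ 2 * Fn X rho par p (S k) f0 v < Fn X rho par p (S k) f0 u)
  w w' (He' : hedge X d a lam Xs (S k) w w')
  (Hbal : balanced_on X rho par p C (S k) f0 w w') :
  balanced_on X rho par p C (S k)
    (shift X f0 u v ((Fn X rho par p (S k) f0 u - C ^ 2 * Fn X rho par p (S k) f0 v) /
        (C ^ 2 / Rpower (pi X rho par v (S k)) p + / Rpower (pi X rho par u (S k)) p))) w w'.
Proof.
  set (F := Fn X rho par p (S k) f0) in *.
  set (Pu := Rpower (pi X rho par u (S k)) p).
  set (Pv := Rpower (pi X rho par v (S k)) p).
  set (al := (F u - C ^ 2 * F v) / (C ^ 2 / Pv + / Pu)).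
  set (g := shift X f0 u v al).
  assert (HC2 : 0 < C ^ 2) by (apply pow_lt; lra).
  assert (Huv' : u <> v) by apply Huv.
  assert (Fpos : forall z, Xs (S k) z -> 0 < F z).
  { intros z Hz. unfold F, Fn, Rdiv. apply Rmult_lt_0_compat. apply Hf0; auto.
    apply Rinv_0_lt_compat, Rpower_gt0. }
  assert (Fvp : 0 < F v) by (apply Fpos, Huv).
  pose proof (arith Pu Pv (C^2) (f0 u) (f0 v) (Rpower_gt0 _ _) (Rpower_gt0 _ _) HC2 Hlt) as A.
  assert (E1 : (f0 u - al) / Pu = C^2 * ((f0 v + al) / Pv)) by exact (proj1 A).
  assert (E2 : (f0 u - al) / Pu <= F u) by exact (proj1 (proj2 A)).
  assert (E3 : F v <= (f0 v + al) / Pv) by exact (proj2 (proj2 A)).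
  clear A.
  assert (Gu : Fn X rho par p (S k) g u = (f0 u - al) / Pu).
  { unfold Fn, g, shift. rewrite Xeq_refl. reflexivity. }
  assert (Gv : Fn X rho par p (S k) g v = (f0 v + al) / Pv).
  { unfold Fn, g, shift. rewrite Xeq_neq by auto. rewrite Xeq_refl. reflexivity. }
  assert (Go : forall z, z <> u -> z <> v -> Fn X rho par p (S k) g z = F z).
  { intros z H1 H2. unfold Fn, g, shift, F, Fn. rewrite !Xeq_neq by auto. reflexivity. }
  change (f0 u / Pu) with (F u) in E2.
  change (f0 v / Pv) with (F v) in E3.
  assert (C3 : C ^ 3 = C * C ^ 2) by reflexivity.
  assert (C2 : C ^ 2 = C * C) by (simpl; ring).
  assert (EU : forall x, hedge X d a lam Xs (S k) u x -> x <> v ->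
     balanced_on X rho par p C (S k) f0 u x -> balanced_on X rho par p C (S k) g u x).
  { intros x Hx Hxv [B1 B2]. assert (Hxu : x <> u) by (intro; subst; apply Hx; auto).
    unfold balanced_on. rewrite Gu, (Go x Hxu Hxv). fold F in B1, B2. fold F.
    pose proof (dist2F X d a lam Xs x0 par rho p C k mu f0 x u v Hm Hla Hl6 Hf HC Hmu Hmub Hcomp
       (hedge_sym _ _ _ _ _ _ _ _ Hm Hx) Huv) as D. fold F in D.
    split; [|lra].
    assert (Fx : F x <= C ^ 2 * ((f0 u - al) / Pu)).
    { rewrite E1. rewrite C3 in D. rewrite C2 in *.
      set (Y := (f0 v + al) / Pv) in *.
      assert (Yp : 0 < Y) by lra.
      assert (C3p : 0 < C * (C * C)) by (repeat apply Rmult_lt_0_compat; lra).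
      assert (S1 : C * (C * C) * F v <= C * (C * C) * Y) by (apply Rmult_le_compat_l; lra).
      assert (S2 : C * (C * C) * Y <= C * C * (C * C * Y)).
      { replace (C * C * (C * C * Y)) with (C * (C * (C * C)) * Y) by ring.
        apply Rmult_le_compat_r; [lra|]. rewrite <- (Rmult_1_l (C * (C * C))) at 1.
        apply Rmult_le_compat_r; lra. }
      lra. }
    apply (Rmult_le_reg_l (C^2)); auto. rewrite <- Rmult_assoc, Rinv_r by lra. lra. }
  assert (EV : forall x, hedge X d a lam Xs (S k) v x -> x <> u ->
     balanced_on X rho par p C (S k) f0 v x -> balanced_on X rho par p C (S k) g v x).
  { intros x Hx Hxu [B1 B2]. assert (Hxv : x <> v) by (intro; subst; apply Hx; auto).
    unfold balanced_on. rewrite Gv, (Go x Hxu Hxv). fold F in B1, B2. fold F.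
    pose proof (dist2F X d a lam Xs x0 par rho p C k mu f0 u v x Hm Hla Hl6 Hf HC Hmu Hmub Hcomp
       Huv Hx) as D. fold F in D.
    assert (Fxp : 0 < F x) by (apply Fpos, Hx).
    split; [lra|].
    rewrite C3 in D. rewrite C2 in *.
    set (Y := (f0 v + al) / Pv) in *.
    assert (Y <= C * F x).
    { apply (Rmult_le_reg_l (C * C)); [nra|].
      replace (C * C * (C * F x)) with (C * (C * C) * F x) by ring. lra. }
    assert (C * F x <= C * C * F x).
    { apply Rmult_le_compat_r; [lra| nra]. }
    lra. }
  assert (Hww : w <> w') by apply He'.
  destruct (classic (w = u)) as [Wu|Wu]; [|destruct (classic (w = v)) as [Wv|Wv]].
  - rewrite Wu in He', Hbal |- *. destruct (classic (w' = v)) as [Wv|Wv].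
    + rewrite Wv in Hbal. exfalso. destruct Hbal as [B1 B2]. fold F in B1, B2. lra.
    + apply EU; auto.
  - rewrite Wv in He', Hbal |- *. destruct (classic (w' = u)) as [Wu'|Wu'].
    + rewrite Wu' in Hbal. exfalso. destruct Hbal as [B1 _]. fold F in B1.
      assert (F u <= C^2 * F v); [|lra].
      apply (Rmult_le_reg_l (/C^2)). apply Rinv_0_lt_compat; auto.
      rewrite <- Rmult_assoc, Rinv_l by lra. lra.
    + apply EV; auto.
  - destruct (classic (w' = u)) as [W'u|W'u]; [|destruct (classic (w' = v)) as [W'v|W'v]].
    + rewrite W'u in He', Hbal |- *. apply bal_sym; [lra|]. apply EU; auto. apply hedge_sym; auto.
      apply bal_sym; auto; lra.
    + rewrite W'v in He', Hbal |- *. apply bal_sym; [lra|]. apply EV; auto. apply hedge_sym; auto.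
      apply bal_sym; auto; lra.
    + unfold balanced_on. rewrite !Go by auto. exact Hbal.
Qed.
Open Scope R_scope.

Theorem lemma3p13
  (X : Type) (d : X -> X -> R)
  (Hmet : is_metric X d) (Hcpt : metric_compact X d) (Hdbl : doubling X d)
  (Hdiam : diam_eq X d (1 / 2))
  (a lam : R) (Hla : lam <= a) (Hl6 : 6 <= lam)
  (Xs : nat -> X -> Prop) (x0 : X) (par : X -> nat -> X)
  (Hfill : hyperbolic_filling X d a Xs x0 par)
  (rho : X -> nat -> R) (Hrho : forall n x, Xs n x -> 0 < rho x n)
  (em ep p : R) (HH1 : H1 X Xs rho em ep) (HH4 : H4 X Xs rho par p)
  (C : R) (HC : 1 < C) (k : nat) (mu f0 : X -> R)
  (Hmu : pmf X Xs k mu) (Hmub : balanced X d a lam Xs par rho p C k mu)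
  (Hf0 : pmf X Xs (S k) f0) (Hf01 : forall x, Xs (S k) x -> f0 x <= 1)
  (Hcomp : compatible X Xs rho par p C k mu f0)
  (w1 w1' : X) (He : hedge X d a lam Xs (S k) w1 w1')
  (Hunb : ~ balanced_on X rho par p C (S k) f0 w1 w1')
  (w w' : X) (He' : hedge X d a lam Xs (S k) w w')
  (Hbal : balanced_on X rho par p C (S k) f0 w w') :
  balanced_on X rho par p C (S k) (balance X rho par p C (S k) w1 w1' f0) w w'.
Proof.
  assert (Ha : 1 < C) by exact HC.
  unfold balance. cbv zeta.
  destruct (Rlt_dec _ _) as [H1|H1].
  - apply (caseA X d a lam Xs x0 par rho p C k mu f0); auto.
  - destruct (Rlt_dec _ _) as [H2|H2].
    + apply (caseA X d a lam Xs x0 par rho p C k mu f0); auto.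
      apply hedge_sym; auto.
    + exact Hbal.
Qed.
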